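(* Let $\mathcal{X},\mathcal{Y}$ be finite sets, $P$ a joint probability mass function on $\mathcal{X}\times\mathcal{Y}$ with $P(x,y)>0$ for all $(x,y)$, and $q\in\mathbb{R}$. Let $G^\ast$ be a conditional guessing function that is optimal under $q$-non-extensivity, i.e. for every $y\in\mathcal{Y}$ and $x,x'\in\mathcal{X}$, $G^\ast(x|y)<G^\ast(x'|y)$ implies $P_q(x|y)\ge P_q(x'|y)$. Then for every $\rho>0$, $$ E_q[G^\ast(X|Y)^\rho]\;\leq\;\sum_{y\in\mathcal{Y}}P_q(\cdot,y)\left[\sum_{x\in\mathcal{X}}P_q(x|y)^{\frac{1}{1+\rho}}\right]^{1+\rho} =\frac{\sum_{y\in\mathcal{Y}}\left[\sum_{x\in\mathcal{X}}P(x,y)^{\frac{q}{1+\rho}}\right]^{1+\rho}}{\sum_{y\in\mathcal{Y}}\sum_{x\in\mathcal{X}}P(x,y)^q}. $$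
   Context: A conditional guessing function is a map $G(\cdot|\cdot)$ on $\mathcal{X}\times\mathcal{Y}$ such that for each $y$, $x\mapsto G(x|y)$ is a bijection from $\mathcal{X}$ onto $\{1,\dots,|\mathcal{X}|\}$. The $q$-normalized expectation under $P$ is $E_q[F(X,Y)]=\frac{\sum_{x,y}F(x,y)P(x,y)^q}{\sum_{x,y}P(x,y)^q}$. Escort distributions: $P(x|y)=P(x,y)/\sum_{x'}P(x',y)$; $P_q(x|y)=\frac{P(x|y)^q}{\sum_{x'\in\mathcal{X}}P(x'|y)^q}$; $P_q(\cdot,y)=\frac{\sum_{x\in\mathcal{X}}P(x,y)^q}{\sum_{x'\in\mathcal{X},y'\in\mathcal{Y}}P(x',y')^q}$. *)

(* Defs.v *)
From Stdlib Require Import Reals List.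
Open Scope R_scope.

(* Finite sets X = {0,...,nx-1}, Y = {0,...,ny-1}; finite sum over {0..n-1}. *)
Definition fsum (n : nat) (f : nat -> R) : R :=
  fold_right Rplus 0 (map f (seq 0 n)).

Definition is_pos_joint_pmf (nx ny : nat) (P : nat -> nat -> R) : Prop :=
  (forall x y, (x < nx)%nat -> (y < ny)%nat -> 0 < P x y) /\
  fsum ny (fun y => fsum nx (fun x => P x y)) = 1.

Definition is_cond_guessing (nx ny : nat) (G : nat -> nat -> nat) : Prop :=
  forall y, (y < ny)%nat ->
    (forall x, (x < nx)%nat -> (1 <= G x y <= nx)%nat) /\
    (forall x x', (x < nx)%nat -> (x' < nx)%nat -> G x y = G x' y -> x = x') /\
    (forall k, (1 <= k <= nx)%nat -> exists x, (x < nx)%nat /\ G x y = k).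

Definition Pcond (nx : nat) (P : nat -> nat -> R) (x y : nat) : R :=
  P x y / fsum nx (fun x' => P x' y).

Definition Pq_cond (nx : nat) (P : nat -> nat -> R) (q : R) (x y : nat) : R :=
  Rpower (Pcond nx P x y) q / fsum nx (fun x' => Rpower (Pcond nx P x' y) q).

Definition Pq_marg (nx ny : nat) (P : nat -> nat -> R) (q : R) (y : nat) : R :=
  fsum nx (fun x => Rpower (P x y) q) /
  fsum ny (fun y' => fsum nx (fun x => Rpower (P x y') q)).

Definition Eq_exp (nx ny : nat) (P : nat -> nat -> R) (q : R)
  (F : nat -> nat -> R) : R :=
  fsum ny (fun y => fsum nx (fun x => F x y * Rpower (P x y) q)) /
  fsum ny (fun y => fsum nx (fun x => Rpower (P x y) q)).

(* Main.v *)
Require Import Defs.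
From Stdlib Require Import Reals List Permutation Lra Lia.
Open Scope R_scope.

Lemma fr_acc (l : list R) a : fold_right Rplus a l = fold_right Rplus 0 l + a.
Proof. induction l; simpl; [lra| rewrite IHl; lra]. Qed.

Lemma fsum_S n f : fsum (S n) f = fsum n f + f n.
Proof. unfold fsum. rewrite seq_S, map_app, fold_right_app. simpl.
  rewrite fr_acc. lra. Qed.
Lemma fsum_0 f : fsum 0 f = 0. Proof. reflexivity. Qed.

Lemma fsum_ext n f g : (forall i, (i < n)%nat -> f i = g i) -> fsum n f = fsum n g.
Proof. induction n; intros H; [reflexivity|]. rewrite !fsum_S, IHn, H; auto. Qed.
Lemma fsum_le n f g : (forall i, (i < n)%nat -> f i <= g i) -> fsum n f <= fsum n g.
Proof. induction n; intros H; [rewrite !fsum_0; lra|]. rewrite !fsum_S.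
  assert (f n <= g n) by auto. assert (fsum n f <= fsum n g) by auto. lra. Qed.
Lemma fsum_scal n f c : fsum n (fun i => c * f i) = c * fsum n f.
Proof. induction n; [rewrite !fsum_0; lra|]. rewrite !fsum_S, IHn. lra. Qed.
Lemma fsum_divr n f c : fsum n (fun i => f i / c) = fsum n f / c.
Proof. unfold Rdiv. rewrite <- (Rmult_comm (/c)), <- fsum_scal. apply fsum_ext; intros; lra. Qed.
Lemma fsum_pos n f : (0 < n)%nat -> (forall i, (i < n)%nat -> 0 < f i) -> 0 < fsum n f.
Proof. induction n; intros Hn H; [lia|]. rewrite fsum_S. destruct n.
  rewrite fsum_0. specialize (H 0%nat). assert (0 < f 0%nat) by (apply H; lia). lra.
  assert (0 < fsum (S n) f) by (apply IHn; [lia| intros; apply H; lia]).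
  assert (0 < f (S n)) by (apply H; lia). lra. Qed.

Lemma fr_perm l l' : Permutation l l' -> fold_right Rplus 0 l = fold_right Rplus 0 l'.
Proof. induction 1; simpl; try lra. Qed.

Lemma Rpow_pos x y : 0 < Rpower x y. Proof. unfold Rpower; apply exp_pos. Qed.
Lemma Rpow_div a b c : 0 < a -> 0 < b -> Rpower (a/b) c = Rpower a c / Rpower b c.
Proof. intros. unfold Rpower, Rdiv. rewrite ln_mult, ln_Rinv by (auto; apply Rinv_0_lt_compat; auto).
  rewrite <- exp_Ropp, <- exp_plus. f_equal. ring. Qed.

Lemma fsum_reindex nx (G' : nat -> nat) (h : nat -> R) :
  (forall x, (x < nx)%nat -> (1 <= G' x <= nx)%nat) ->
  (forall x x', (x < nx)%nat -> (x' < nx)%nat -> G' x = G' x' -> x = x') ->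
  fsum nx (fun x => h (G' x)) = fsum nx (fun k => h (S k)).
Proof. intros Hr Hi. unfold fsum.
  rewrite <- (map_map G' h), <- (map_map S h), seq_shift.
  apply fr_perm, Permutation_map, NoDup_Permutation_bis.
  - apply FinFun.Injective_map_NoDup_in; [|apply seq_NoDup].
    intros x y Hx Hy. apply in_seq in Hx, Hy. apply Hi; lia.
  - rewrite length_map, !length_seq. lia.
  - intros a Ha. apply in_map_iff in Ha. destruct Ha as [x [<- Hx]].
    apply in_seq in Hx. apply in_seq. specialize (Hr x ltac:(lia)). lia.
Qed.

Lemma count_ind n g : fsum n (fun k => if Nat.leb (S k) g then 1 else 0) = INR (Nat.min n g).
Proof. induction n; [reflexivity|]. rewrite fsum_S, IHn.
  destruct (Nat.leb_spec (S n) g).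
  - replace (Nat.min (S n) g) with (S (Nat.min n g)) by lia. rewrite S_INR; lra.
  - replace (Nat.min (S n) g) with (Nat.min n g) by lia. lra. Qed.

Lemma Rpow_mul a b c : 0 < a -> 0 < b -> Rpower (a*b) c = Rpower a c * Rpower b c.
Proof. intros. unfold Rpower. rewrite ln_mult by auto. rewrite <- exp_plus. f_equal; ring. Qed.

Lemma arikan nx (G' : nat -> nat) (p : nat -> R) rho :
  (0 < nx)%nat -> 0 < rho ->
  (forall x, (x < nx)%nat -> 0 < p x) ->
  (forall x, (x < nx)%nat -> (1 <= G' x <= nx)%nat) ->
  (forall x x', (x < nx)%nat -> (x' < nx)%nat -> G' x = G' x' -> x = x') ->
  (forall x x', (x < nx)%nat -> (x' < nx)%nat -> (G' x < G' x')%nat -> p x >= p x') ->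
  fsum nx (fun x => Rpower (INR (G' x)) rho * p x)
   <= Rpower (fsum nx (fun x => Rpower (p x) (1/(1+rho)))) (1+rho).
Proof.
  intros Hn Hrho Hp Hr Hi Hm.
  set (s := 1/(1+rho)).
  set (T := fsum nx (fun x => Rpower (p x) s)).
  assert (Hs : 0 < s) by (unfold s; apply Rdiv_lt_0_compat; lra).
  assert (HT : 0 < T) by (apply fsum_pos; auto; intros; apply Rpow_pos).
  assert (HA : forall x, (x < nx)%nat -> INR (G' x) * Rpower (p x) s <= T).
  { intros x Hx.
    assert (Hc : INR (G' x) = fsum nx (fun x' => if Nat.leb (G' x') (G' x) then 1 else 0)).
    { rewrite (fsum_reindex nx G' (fun k => if Nat.leb k (G' x) then 1 else 0)) by auto.
      rewrite count_ind. specialize (Hr x Hx). f_equal; lia. }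
    rewrite Hc, Rmult_comm, <- fsum_scal. unfold T. apply fsum_le. intros x' Hx'.
    destruct (Nat.leb_spec (G' x') (G' x)).
    - rewrite Rmult_1_r. destruct (Nat.eq_dec (G' x') (G' x)) as [e|ne].
      + rewrite (Hi x' x Hx' Hx e). lra.
      + apply Rle_Rpower_l; [lra|]. split; [apply Hp; auto|].
        specialize (Hm x' x Hx' Hx ltac:(lia)). lra.
    - rewrite Rmult_0_r. left; apply Rpow_pos. }
  assert (HB : forall x, (x < nx)%nat ->
     Rpower (INR (G' x)) rho * p x <= Rpower T rho * Rpower (p x) s).
  { intros x Hx. specialize (HA x Hx). specialize (Hp x Hx).
    assert (Hg : 0 < INR (G' x)) by (apply lt_0_INR; specialize (Hr x Hx); lia).
    assert (Hpx : p x = Rpower (p x) s * Rpower (p x) (s*rho)).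
    { rewrite <- Rpower_plus. replace (s + s*rho) with 1 by (unfold s; field; lra).
      rewrite Rpower_1; auto. }
    rewrite Hpx at 1. rewrite <- Rpower_mult.
    replace (Rpower (INR (G' x)) rho * (Rpower (p x) s * Rpower (Rpower (p x) s) rho))
      with (Rpower (INR (G' x) * Rpower (p x) s) rho * Rpower (p x) s)
      by (rewrite Rpow_mul by (auto; apply Rpow_pos); ring).
    apply Rmult_le_compat_r; [left; apply Rpow_pos|].
    apply Rle_Rpower_l; [lra|]. split; auto.
    apply Rmult_lt_0_compat; auto; apply Rpow_pos. }
  eapply Rle_trans. apply fsum_le. exact HB.
  rewrite fsum_scal. fold T. rewrite Rpower_plus, Rpower_1 by auto. lra.
Qed.

Theorem theorem3 (nx ny : nat) (P : nat -> nat -> R) (q : R)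
  (G : nat -> nat -> nat)
  (HP : is_pos_joint_pmf nx ny P)
  (HG : is_cond_guessing nx ny G)
  (Hopt : forall y x x', (y < ny)%nat -> (x < nx)%nat -> (x' < nx)%nat ->
     (G x y < G x' y)%nat -> Pq_cond nx P q x y >= Pq_cond nx P q x' y)
  (rho : R) (Hrho : 0 < rho) :
  Eq_exp nx ny P q (fun x y => Rpower (INR (G x y)) rho)
    <= fsum ny (fun y => Pq_marg nx ny P q y *
         Rpower (fsum nx (fun x => Rpower (Pq_cond nx P q x y) (1 / (1 + rho))))
                (1 + rho))
  /\
  fsum ny (fun y => Pq_marg nx ny P q y *
         Rpower (fsum nx (fun x => Rpower (Pq_cond nx P q x y) (1 / (1 + rho))))
                (1 + rho))
    = fsum ny (fun y => Rpower (fsum nx (fun x => Rpower (P x y) (q / (1 + rho))))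
                               (1 + rho))
      / fsum ny (fun y => fsum nx (fun x => Rpower (P x y) q)).
Proof.
  destruct HP as [Hpos Hsum].
  assert (Hnx : (0 < nx)%nat).
  { destruct nx; [|lia]. exfalso. rewrite (fsum_ext ny _ (fun y => 0 * 0)) in Hsum
      by (intros; rewrite fsum_0; ring). rewrite fsum_scal in Hsum. lra. }
  assert (Hny : (0 < ny)%nat).
  { destruct ny; [|lia]. exfalso. rewrite fsum_0 in Hsum. lra. }
  set (A := fun y => fsum nx (fun x => Rpower (P x y) q)).
  set (Z := fsum ny A).
  assert (HA : forall y, 0 < A y) by (intros; apply fsum_pos; auto; intros; apply Rpow_pos).
  assert (HZ : 0 < Z) by (apply fsum_pos; auto).
  assert (Hpq : forall x y, (x < nx)%nat -> (y < ny)%nat ->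
            Pq_cond nx P q x y = Rpower (P x y) q / A y).
  { intros x y Hx Hy. unfold Pq_cond, Pcond.
    assert (HS : 0 < fsum nx (fun x' => P x' y)) by (apply fsum_pos; auto).
    rewrite (fsum_ext nx (fun x' => Rpower (P x' y / fsum nx (fun x' => P x' y)) q) (fun x' => Rpower (P x' y) q / Rpower (fsum nx (fun x' => P x' y)) q))
      by (intros; apply Rpow_div; auto).
    rewrite fsum_divr, Rpow_div by auto. fold (A y).
    pose proof (Rpow_pos (fsum nx (fun x' => P x' y)) q). pose proof (HA y).
    field. lra. }
  split.
  - unfold Eq_exp. change (fsum ny (fun y0 => fsum nx (fun x => Rpower (P x y0) q))) with Z.
    set (T := fun y => Rpower (fsum nx (fun x => Rpower (Pq_cond nx P q x y) (1 / (1 + rho)))) (1 + rho)).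
    replace (fsum ny (fun y => Pq_marg nx ny P q y * Rpower (fsum nx (fun x => Rpower (Pq_cond nx P q x y) (1 / (1 + rho)))) (1 + rho))) with (fsum ny (fun y => A y * T y / Z)).
    2:{ apply fsum_ext. intros y Hy. unfold Pq_marg. fold (A y) Z. change (fsum ny (fun y0 => fsum nx (fun x => Rpower (P x y0) q))) with Z. unfold T. field. lra. }
    rewrite fsum_divr. unfold Rdiv. apply Rmult_le_compat_r; [left; apply Rinv_0_lt_compat; auto|].
    apply fsum_le. intros y Hy.
    rewrite (fsum_ext nx _ (fun x => A y * (Rpower (INR (G x y)) rho * Pq_cond nx P q x y))).
    2:{ intros x Hx. rewrite Hpq by auto. pose proof (HA y). field. lra. }
    rewrite fsum_scal. apply Rmult_le_compat_l; [left; auto|].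
    destruct (HG y Hy) as [Hr [Hi _]].
    apply arikan; auto.
    + intros x Hx. rewrite Hpq by auto. apply Rdiv_lt_0_compat; auto. apply Rpow_pos.
  - rewrite <- fsum_divr. fold A Z. apply fsum_ext. intros y Hy.
    unfold Pq_marg. fold (A y) Z.
    rewrite (fsum_ext nx _ (fun x => Rpower (P x y) (q / (1 + rho)) / Rpower (A y) (1/(1+rho)))).
    2:{ intros x Hx. rewrite Hpq by auto. rewrite Rpow_div by (auto; apply Rpow_pos).
        rewrite Rpower_mult. f_equal. f_equal. field. lra. }
    rewrite fsum_divr.
    assert (HB : 0 < fsum nx (fun x => Rpower (P x y) (q / (1 + rho))))
      by (apply fsum_pos; auto; intros; apply Rpow_pos).
    rewrite Rpow_div by (auto; apply Rpow_pos). rewrite Rpower_mult.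
    replace (1 / (1 + rho) * (1 + rho)) with 1 by (field; lra).
    rewrite Rpower_1 by auto.
    pose proof (HA y). pose proof (Rpow_pos (fsum nx (fun x => Rpower (P x y) (q / (1 + rho)))) (1+rho)).
    change (fsum ny (fun y0 => fsum nx (fun x => Rpower (P x y0) q))) with Z. field. lra.
Qed.
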